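(* (1) Let $(\mathcal T,(N_B,R_B),(N_A,R_A),\mathbb D,\zeta)$ be an object of $\overline{\mathrm{RArr}}(\mathcal B,\mathcal A)$, i.e. $\mathbb D=(D,\Delta,\varepsilon)$ is a comonad on $\mathcal B$ and $(R_B,\zeta)$ is a comonad arrow from $\mathbb D$ to $N_AR_A$ such that $\bar\zeta:=(\epsilon^BN_AR_AN_B)\circ(N_B\zeta N_B)\circ(N_BD\eta^B):N_BD\to N_AR_AN_B$ is invertible. Then $(\mathcal T,(N_A,R_A),(N_B,R_B),\tau)$ is a pre-torsor, where $\tau=(R_AN_BR_B\bar\zeta)\circ(R_AN_B\eta^BD)\circ(R_A\bar\zeta^{-1})\circ(\eta^AR_AN_B)$. (2) If $(F,t)$ is a morphism in $\overline{\mathrm{RArr}}(\mathcal B,\mathcal A)$ between two such objects, then $F$ is a morphism between the corresponding pre-torsors of (1).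
   Context: Conventions: $\circ$ vertical composition, juxtaposition horizontal composition; a functor's name denotes its identity transformation. Adjunctions $(N_A:\mathcal A\to\mathcal T,R_A)$, $(N_B:\mathcal B\to\mathcal T,R_B)$ with units $\eta^A,\eta^B$, counits $\epsilon^A,\epsilon^B$; $N_AR_A$ is a comonad with comultiplication $N_A\eta^AR_A$ and counit $\epsilon^A$. A comonad arrow $(R_B,\zeta)$ from $\mathbb D$ to $N_AR_A$ means $\zeta:DR_B\to R_BN_AR_A$ with $(R_B\epsilon^A)\circ\zeta=\varepsilon R_B$, $(R_BN_A\eta^AR_A)\circ\zeta=(\zeta N_AR_A)\circ(D\zeta)\circ(\Delta R_B)$. Pre-torsor: $\tau:R_AN_B\to R_AN_BR_BN_AR_AN_B$ with $(R_AN_BR_B\epsilon^AN_B)\circ\tau=R_AN_B\eta^B$, $(R_A\epsilon^BN_AR_AN_B)\circ\tau=\eta^AR_AN_B$, $(R_AN_BR_BN_A\tau)\circ\tau=(\tau R_BN_AR_AN_B)\circ\tau$. For $F:\mathcal T'\to\mathcal T$ with $R_AF=R'_A$, $R_BF=R'_B$ put $a=(\epsilon^AFN'_A)\circ(N_A\eta'^A)$, $b=(\epsilon^BFN'_B)\circ(N_B\eta'^B)$. A pre-torsor morphism is such $F$ with $(R_AbR_BaR_Ab)\circ\tau=\tau'\circ(R_Ab)$. A morphism in $\overline{\mathrm{RArr}}(\mathcal B,\mathcal A)$ is $(F,t)$ with $F$ such a functor and $t:\mathbb D\to\mathbb D'$ a comonad morphism with $(R_BaR'_A)\circ(\zeta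 F)=\zeta'\circ(tR'_B)$. *)

(* Defs.v *)
Set Implicit Arguments.
Unset Strict Implicit.

Record Category := {
  Obj :> Type;
  Hom : Obj -> Obj -> Type;
  idm : forall a, Hom a a;
  cmp : forall a b c, Hom b c -> Hom a b -> Hom a c;
  cmp_id_l : forall a b (f : Hom a b), cmp (idm b) f = f;
  cmp_id_r : forall a b (f : Hom a b), cmp f (idm a) = f;
  cmp_assoc : forall a b c d (h : Hom c d) (g : Hom b c) (f : Hom a b),
      cmp h (cmp g f) = cmp (cmp h g) f }.
Arguments Hom {c0} _ _.
Arguments idm {c0} a.
Arguments cmp {c0 a b c} _ _.
Infix "⊚" := cmp (at level 40, left associativity).

Record Functor (C D : Category) := {
  fobj :> Obj C -> Obj D;
  fmap : forall a b, Hom a b -> Hom (fobj a) (fobj b);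
  fmap_id : forall a, fmap (idm a) = idm (fobj a);
  fmap_cmp : forall a b c (g : Hom b c) (f : Hom a b),
      fmap (g ⊚ f) = fmap g ⊚ fmap f }.
Arguments fmap {C D} f0 {a b} _.

Program Definition Fid (C : Category) : Functor C C :=
  {| fobj := fun x => x; fmap := fun a b f => f |}.
Next Obligation. reflexivity. Qed.
Next Obligation. reflexivity. Qed.

Program Definition Fcomp (C D E : Category) (G : Functor D E) (F : Functor C D)
  : Functor C E :=
  {| fobj := fun x => G (F x); fmap := fun a b f => fmap G (fmap F f) |}.
Next Obligation. destruct G, F; simpl in *; intros; now rewrite fmap_id1, fmap_id0. Qed.
Next Obligation. destruct G, F; simpl in *; intros; now rewrite fmap_cmp1, fmap_cmp0. Qed.
Infix "○" := Fcomp (at level 45, right associativity).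

(* A transformation between (object parts of) functors F, G : C -> D is a
   family of components; naturality is the separate predicate [natural].
   Horizontal/whiskered composites are the usual componentwise formulas;
   functor composition is strictly associative on objects, so these types
   match up to conversion. *)
Definition Trans {C D : Category} (F G : Obj C -> Obj D) :=
  forall x, Hom (F x) (G x).

Definition natural {C D : Category} (F G : Functor C D) (α : Trans F G) : Prop :=
  forall a b (f : Hom a b), fmap G f ⊚ α a = α b ⊚ fmap F f.
Arguments natural {C D} F G α.

Definition teq {C D : Category} {F G : Obj C -> Obj D} (α β : Trans F G) : Prop :=
  forall x, α x = β x.
Infix "≡" := teq (at level 70).

Definition idt {C D : Category} (F : Obj C -> Obj D) : Trans F F :=
  fun x => idm (F x).

Definition vc {C D : Category} {F G H : Obj C -> Obj D}
  (β : Trans G H) (α : Trans F G) : Trans F H := fun x => β x ⊚ α x.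

Definition wl {C D E : Category} (G : Functor D E) {F F' : Obj C -> Obj D}
  (α : Trans F F') : Trans (fun x => G (F x)) (fun x => G (F' x)) :=
  fun x => fmap G (α x).

Definition wr {B C D : Category} {F F' : Obj C -> Obj D} (α : Trans F F')
  (H : Obj B -> Obj C) : Trans (fun x => F (H x)) (fun x => F' (H x)) :=
  fun x => α (H x).

Definition hc {C D E : Category} {G : Functor D E} {G' : Obj D -> Obj E}
  {F F' : Obj C -> Obj D} (β : Trans G G') (α : Trans F F')
  : Trans (fun x => G (F x)) (fun x => G' (F' x)) :=
  fun x => β (F' x) ⊚ fmap G (α x).

Record Adjunction {C D : Category} (N : Functor C D) (R : Functor D C) := {
  unit : Trans (Fid C) (R ○ N);
  counit : Trans (N ○ R) (Fid D);
  unit_nat : natural (Fid C) (R ○ N) unit;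
  counit_nat : natural (N ○ R) (Fid D) counit;
  triangle_N : forall c, counit (N c) ⊚ fmap N (unit c) = idm (N c);
  triangle_R : forall d, fmap R (counit d) ⊚ unit (R d) = idm (R d) }.
Arguments unit {C D N R} a x.
Arguments counit {C D N R} a x.

Record Comonad (C : Category) := {
  cD : Functor C C;
  cDelta : Trans cD (cD ○ cD);
  cEps : Trans cD (Fid C);
  cDelta_nat : natural cD (cD ○ cD) cDelta;
  cEps_nat : natural cD (Fid C) cEps;
  counit_left : vc (wr cEps cD) cDelta ≡ idt cD;
  counit_right : vc (wl cD cEps) cDelta ≡ idt cD;
  coassoc : vc (wr cDelta cD) cDelta ≡ vc (wl cD cDelta) cDelta }.
Arguments cD {C} c.
Arguments cDelta {C} c x.
Arguments cEps {C} c x.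

Definition ComonadMorphism {C : Category} (M M' : Comonad C)
  (t : Trans (cD M) (cD M')) : Prop :=
  natural (cD M) (cD M') t /\
  vc (cEps M') t ≡ cEps M /\
  vc (cDelta M') t ≡ vc (hc t t) (cDelta M).
Arguments ComonadMorphism {C} M M' t.

Definition zetabar {B A T : Category} {NB : Functor B T} {RB : Functor T B}
  {NA : Functor A T} {RA : Functor T A} (adjB : Adjunction NB RB)
  (M : Comonad B) (zeta : Trans (cD M ○ RB) (RB ○ NA ○ RA))
  : Trans (NB ○ cD M) (NA ○ RA ○ NB) :=
  vc (wr (counit adjB) (NA ○ RA ○ NB))
     (vc (wl NB (wr zeta NB)) (wl NB (wl (cD M) (unit adjB)))).

Record RArrObj (B A T : Category) (NB : Functor B T) (RB : Functor T B)
    (NA : Functor A T) (RA : Functor T A) := {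
  adjB : Adjunction NB RB;
  adjA : Adjunction NA RA;
  cmd : Comonad B;
  zeta : Trans (cD cmd ○ RB) (RB ○ NA ○ RA);
  zeta_nat : natural (cD cmd ○ RB) (RB ○ NA ○ RA) zeta;
  arrow_counit : vc (wl RB (counit adjA)) zeta ≡ wr (cEps cmd) RB;
  arrow_comult :
    vc (wl RB (wr (wl NA (unit adjA)) RA)) zeta
    ≡ vc (wr zeta (NA ○ RA)) (vc (wl (cD cmd) zeta) (wr (cDelta cmd) RB));
  zetainv : Trans (NA ○ RA ○ NB) (NB ○ cD cmd);
  zetainv_l : vc zetainv (zetabar adjB zeta) ≡ idt (NB ○ cD cmd);
  zetainv_r : vc (zetabar adjB zeta) zetainv ≡ idt (NA ○ RA ○ NB) }.
Arguments adjB {B A T NB RB NA RA} r.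
Arguments adjA {B A T NB RB NA RA} r.
Arguments cmd {B A T NB RB NA RA} r.
Arguments zeta {B A T NB RB NA RA} r x.
Arguments zetainv {B A T NB RB NA RA} r x.

Definition tau {B A T : Category} {NB : Functor B T} {RB : Functor T B}
  {NA : Functor A T} {RA : Functor T A} (X : RArrObj NB RB NA RA)
  : Trans (RA ○ NB) (RA ○ NB ○ RB ○ NA ○ RA ○ NB) :=
  vc (wl RA (wl NB (wl RB (zetabar (adjB X) (zeta X)))))
    (vc (wl RA (wl NB (wr (unit (adjB X)) (cD (cmd X)))))
      (vc (wl RA (zetainv X))
          (wr (unit (adjA X)) (RA ○ NB)))).

Definition IsPreTorsor {A B T : Category} {NA : Functor A T} {RA : Functor T A}
  {NB : Functor B T} {RB : Functor T B}
  (adjA : Adjunction NA RA) (adjB : Adjunction NB RB)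
  (τ : Trans (RA ○ NB) (RA ○ NB ○ RB ○ NA ○ RA ○ NB)) : Prop :=
  natural (RA ○ NB) (RA ○ NB ○ RB ○ NA ○ RA ○ NB) τ /\
  vc (wl RA (wl NB (wl RB (wr (counit adjA) NB)))) τ ≡ wl RA (wl NB (unit adjB)) /\
  vc (wl RA (wr (counit adjB) (NA ○ RA ○ NB))) τ ≡ wr (unit adjA) (RA ○ NB) /\
  vc (wl RA (wl NB (wl RB (wl NA τ)))) τ ≡ vc (wr τ (RB ○ NA ○ RA ○ NB)) τ.
Arguments IsPreTorsor {A B T NA RA NB RB} adjA adjB τ.

Definition cmpa {A T T' : Category} {NA : Functor A T} {RA : Functor T A}
  {NA' : Functor A T'} (F : Functor T' T)
  (adjA : Adjunction NA RA) (adjA' : Adjunction NA' (RA ○ F))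
  : Trans NA (F ○ NA') :=
  vc (wr (counit adjA) (F ○ NA')) (wl NA (unit adjA')).
Arguments cmpa {A T T' NA RA NA'} F adjA adjA'.

(* Morphism of pre-torsors: F : T' -> T with R_A F = R'_A, R_B F = R'_B
   (built in by taking R'_A := R_A ○ F, R'_B := R_B ○ F), such that
   (R_A b R_B a R_A b) ∘ τ = τ' ∘ (R_A b). *)
Definition IsPreTorsorMorphism {A B T T' : Category}
  {NA : Functor A T} {RA : Functor T A} {NB : Functor B T} {RB : Functor T B}
  {NA' : Functor A T'} {NB' : Functor B T'} (F : Functor T' T)
  (adjA : Adjunction NA RA) (adjB : Adjunction NB RB)
  (τ : Trans (RA ○ NB) (RA ○ NB ○ RB ○ NA ○ RA ○ NB))
  (adjA' : Adjunction NA' (RA ○ F)) (adjB' : Adjunction NB' (RB ○ F))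
  (τ' : Trans ((RA ○ F) ○ NB')
              ((RA ○ F) ○ NB' ○ (RB ○ F) ○ NA' ○ (RA ○ F) ○ NB')) : Prop :=
  let a := cmpa F adjA adjA' in
  let b := cmpa F adjB adjB' in
  vc (wl RA (hc b (wl RB (hc a (wl RA b))))) τ ≡ vc τ' (wl RA b).
Arguments IsPreTorsorMorphism {A B T T' NA RA NB RB NA' NB'} F adjA adjB τ adjA' adjB' τ'.

Definition IsRArrMorphism {B A T T' : Category}
  {NB : Functor B T} {RB : Functor T B} {NA : Functor A T} {RA : Functor T A}
  {NB' : Functor B T'} {NA' : Functor A T'} (F : Functor T' T)
  (X : RArrObj NB RB NA RA) (Y : RArrObj NB' (RB ○ F) NA' (RA ○ F))
  (t : Trans (cD (cmd X)) (cD (cmd Y))) : Prop :=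
  ComonadMorphism (cmd X) (cmd Y) t /\
  vc (wl RB (wr (cmpa F (adjA X) (adjA Y)) (RA ○ F))) (wr (zeta X) F)
  ≡ vc (zeta Y) (wr t (RB ○ F)).
Arguments IsRArrMorphism {B A T T' NB RB NA RA NB' NA'} F X Y t.

(* Main.v *)
Require Import Defs.
From Stdlib Require Import ssreflect.

Ltac ra := repeat rewrite -cmp_assoc.
Ltac fm := repeat rewrite fmap_cmp.

Lemma un_nat {C D : Category} {N : Functor C D} {R : Functor D C} (ad : Adjunction N R)
  a b (f : Hom a b) : fmap R (fmap N f) ⊚ unit ad a = unit ad b ⊚ f.
Proof. exact (unit_nat ad f). Qed.

Lemma co_nat {C D : Category} {N : Functor C D} {R : Functor D C} (ad : Adjunction N R)
  a b (f : Hom a b) : f ⊚ counit ad a = counit ad b ⊚ fmap N (fmap R f).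
Proof. exact (counit_nat ad f). Qed.

Lemma transL {C D : Category} {N : Functor C D} {R : Functor D C} (ad : Adjunction N R)
  c d (f : Hom (N c) d) : counit ad d ⊚ fmap N (fmap R f ⊚ unit ad c) = f.
Proof.
  rewrite fmap_cmp cmp_assoc -co_nat -cmp_assoc triangle_N. apply cmp_id_r.
Qed.

Lemma transR {C D : Category} {N : Functor C D} {R : Functor D C} (ad : Adjunction N R)
  c d (u : Hom c (R d)) : fmap R (counit ad d ⊚ fmap N u) ⊚ unit ad c = u.
Proof.
  rewrite fmap_cmp -cmp_assoc un_nat cmp_assoc triangle_R. apply cmp_id_l.
Qed.

Lemma transL_inj {C D : Category} {N : Functor C D} {R : Functor D C} (ad : Adjunction N R)
  c d (f f' : Hom (N c) d) : fmap R f ⊚ unit ad c = fmap R f' ⊚ unit ad c -> f = f'.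
Proof. move=> H. by rewrite -(transL ad _ _ f) -(transL ad _ _ f') H. Qed.

Lemma transR_inj {C D : Category} {N : Functor C D} {R : Functor D C} (ad : Adjunction N R)
  c d (u u' : Hom c (R d)) : counit ad d ⊚ fmap N u = counit ad d ⊚ fmap N u' -> u = u'.
Proof. move=> H. by rewrite -(transR ad _ _ u) -(transR ad _ _ u') H. Qed.

Lemma inv_nat {C : Category} {a b c d : C} (z1 : Hom a b) (i1 : Hom b a) (z2 : Hom c d)
  (i2 : Hom d c) (m : Hom b d) (n : Hom a c) :
  z1 ⊚ i1 = idm b -> i2 ⊚ z2 = idm c -> m ⊚ z1 = z2 ⊚ n -> n ⊚ i1 = i2 ⊚ m.
Proof.
  move=> H1 H2 H3.
  rewrite -(cmp_id_l n) -H2 -(cmp_assoc i2) -H3 -!cmp_assoc H1. by rewrite cmp_id_r.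
Qed.

Lemma ctx {C : Category} {b c d : C} {X : Hom c d} {Y : Hom b c} {Z : Hom b d} :
  X ⊚ Y = Z -> forall (a : C) (W : Hom a b), X ⊚ (Y ⊚ W) = Z ⊚ W.
Proof. move=> H a W. by rewrite cmp_assoc H. Qed.

Lemma fctx {C D : Category} (F : Functor C D) {a b c : C} {e : D} (g : Hom b c) (f : Hom a b)
  (W : Hom e (F a)) : fmap F g ⊚ (fmap F f ⊚ W) = fmap F (g ⊚ f) ⊚ W.
Proof. by rewrite fmap_cmp cmp_assoc. Qed.

Ltac nrw L := let H := fresh "H" in have H := L; cbn in H; cbn; rewrite H; clear H.
Ltac nrwr L := let H := fresh "H" in have H := L; cbn in H; cbn; rewrite -H; clear H.

Lemma cancel_mid {C : Category} {a c d e : C} (p : Hom c e) (i : Hom d c) (z : Hom c d)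
  (W : Hom a c) : i ⊚ z = idm c -> (p ⊚ i) ⊚ (z ⊚ W) = p ⊚ W.
Proof. move=> H. by rewrite -cmp_assoc (cmp_assoc i) H cmp_id_l. Qed.

Ltac ras := repeat (rewrite <- cmp_assoc).

Section P1.
Context {B A T : Category} {NB : Functor B T} {RB : Functor T B}
  {NA : Functor A T} {RA : Functor T A} (X : RArrObj NB RB NA RA).
Local Notation D := (cD (cmd X)).
Local Notation aB := (adjB X).
Local Notation aA := (adjA X).
Local Notation zinv := (zetainv X).
Local Notation zbar0 := (zetabar (adjB X) (zeta X)).
Local Notation zbar b := (zbar0 b : Hom (NB (D b)) (NA (RA (NB b)))).

Definition zhat (b : B) : Hom (D b) (RB (NA (RA (NB b)))) :=
  zeta X (NB b) ⊚ fmap D (unit aB b).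
Definition gg (b : B) : Hom (NA (RA (NB b))) (NB (RB (NA (RA (NB b))))) :=
  fmap NB (zhat b) ⊚ zinv b.

Lemma zbar_eq b : zbar b = counit aB (NA (RA (NB b))) ⊚ fmap NB (zhat b).
Proof. rewrite /zetabar /zhat /vc /wr /wl /=. by rewrite fmap_cmp. Qed.

Opaque zetabar.
Lemma zhat_eq b : fmap RB (zbar b) ⊚ unit aB (D b) = zhat b.
Proof. by rewrite zbar_eq transR. Qed.

Lemma zl b : zinv b ⊚ zbar b = idm _.
Proof. exact (zetainv_l X b). Qed.
Lemma zr b : zbar b ⊚ zinv b = idm _.
Proof. exact (zetainv_r X b). Qed.

Lemma tau_eq b : tau X b = fmap RA (gg b) ⊚ unit aA (RA (NB b)).
Proof.
  rewrite /tau /gg /vc /wr /wl /=.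
  rewrite !cmp_assoc -!fmap_cmp. by rewrite zhat_eq.
Qed.

Opaque tau.
Lemma zhat_nat b1 b2 (f : Hom b1 b2) :
  fmap RB (fmap NA (fmap RA (fmap NB f))) ⊚ zhat b1 = zhat b2 ⊚ fmap D f.
Proof.
  rewrite /zhat cmp_assoc. rewrite (zeta_nat X (fmap NB f)) /=.
  rewrite -!cmp_assoc -!fmap_cmp. by rewrite un_nat.
Qed.

Lemma zbar_nat b1 b2 (f : Hom b1 b2) :
  fmap NA (fmap RA (fmap NB f)) ⊚ zbar b1 = zbar b2 ⊚ fmap NB (fmap D f).
Proof.
  rewrite !zbar_eq cmp_assoc co_nat. rewrite -cmp_assoc -(fmap_cmp NB) zhat_nat. by rewrite fmap_cmp cmp_assoc.
Qed.

Lemma zinv_nat b1 b2 (f : Hom b1 b2) :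
  fmap NB (fmap D f) ⊚ zinv b1 = zinv b2 ⊚ fmap NA (fmap RA (fmap NB f)).
Proof.
  apply: inv_nat; [exact: zr | exact: zl | exact: zbar_nat].
Qed.

Lemma gg_nat b1 b2 (f : Hom b1 b2) :
  fmap NB (fmap RB (fmap NA (fmap RA (fmap NB f)))) ⊚ gg b1 = gg b2 ⊚ fmap NA (fmap RA (fmap NB f)).
Proof.
  rewrite /gg cmp_assoc -fmap_cmp zhat_nat fmap_cmp -!cmp_assoc. by rewrite zinv_nat.
Qed.

Lemma tau_nat : natural (RA ○ NB) (RA ○ NB ○ RB ○ NA ○ RA ○ NB) (tau X).
Proof.
  move=> b1 b2 f /=. rewrite !tau_eq cmp_assoc -fmap_cmp gg_nat fmap_cmp -!cmp_assoc.
  by rewrite un_nat.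
Qed.

Lemma ax_c b : fmap RA (counit aB (NA (RA (NB b)))) ⊚ tau X b = unit aA (RA (NB b)).
Proof.
  rewrite tau_eq cmp_assoc -fmap_cmp /gg cmp_assoc -zbar_eq zr fmap_id. apply cmp_id_l.
Qed.

Lemma rbeps b : fmap RB (counit aA (NB b)) ⊚ zhat b = unit aB b ⊚ cEps (cmd X) b.
Proof.
  have H := arrow_counit X (NB b). rewrite /vc /wl /wr /= in H.
  rewrite /zhat cmp_assoc H.
  symmetry. exact (cEps_nat (cmd X) (unit aB b)).
Qed.

Lemma nbeps b : counit aA (NB b) ⊚ zbar b = fmap NB (cEps (cmd X) b).
Proof.
  rewrite zbar_eq cmp_assoc co_nat -cmp_assoc -(fmap_cmp NB) rbeps (fmap_cmp NB) cmp_assoc triangle_N.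
  apply cmp_id_l.
Qed.

Lemma ax_b b : fmap RA (fmap NB (fmap RB (counit aA (NB b)))) ⊚ tau X b
               = fmap RA (fmap NB (unit aB b)).
Proof.
  rewrite tau_eq cmp_assoc -fmap_cmp /gg cmp_assoc -(fmap_cmp NB) rbeps (fmap_cmp NB).
  rewrite -nbeps -(cmp_assoc (fmap NB (unit aB b))) -(cmp_assoc (counit aA (NB b))) zr cmp_id_r.
  rewrite fmap_cmp -cmp_assoc triangle_R. apply cmp_id_r.
Qed.


Lemma zn (x y : T) (f : Hom x y) :
  fmap RB (fmap NA (fmap RA f)) ⊚ zeta X x = zeta X y ⊚ fmap D (fmap RB f).
Proof. exact (zeta_nat X f). Qed.
Lemma dn (x y : B) (f : Hom x y) :
  fmap D (fmap D f) ⊚ cDelta (cmd X) x = cDelta (cmd X) y ⊚ fmap D f.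
Proof. exact (cDelta_nat (cmd X) f). Qed.

Lemma key2 b : fmap RB (gg b) ⊚ zhat b = unit aB (RB (NA (RA (NB b)))) ⊚ zhat b.
Proof.
  rewrite -{1}zhat_eq cmp_assoc -(fmap_cmp RB) /gg -cmp_assoc zl cmp_id_r. exact: un_nat.
Qed.

Lemma zhat_def b : zhat b = zeta X (NB b) ⊚ fmap D (unit aB b).
Proof. reflexivity. Qed.
Lemma gg_def b : gg b = fmap NB (zhat b) ⊚ zinv b.
Proof. reflexivity. Qed.
Opaque zhat gg.
Lemma claim2 b : fmap RB (fmap NA (tau X b)) ⊚ zhat b
  = zhat (RB (NA (RA (NB b)))) ⊚ (fmap D (zhat b) ⊚ cDelta (cmd X) b).
Proof.
  have H := arrow_comult X (NB b). rewrite /vc /wl /wr /= in H.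
  rewrite tau_eq (fmap_cmp NA) (fmap_cmp RB) {1}zhat_def -cmp_assoc (ctx H).
  rewrite -!cmp_assoc (ctx (zn _ _ _)) -!cmp_assoc -(dn _ _ (unit aB b)) !(fctx D).
  rewrite -(cmp_assoc (fmap RB (gg b))) key2 !zhat_def.
  reflexivity.
Qed.

Lemma claim1 b : fmap NA (tau X b) ⊚ zbar b
  = zbar (RB (NA (RA (NB b)))) ⊚ fmap NB (fmap D (zhat b) ⊚ cDelta (cmd X) b).
Proof.
  apply: (transL_inj aB).
  rewrite (fmap_cmp RB) -(cmp_assoc (fmap RB (fmap NA _))). cbn. rewrite zhat_eq claim2.
  rewrite (fmap_cmp RB) -cmp_assoc un_nat [RHS]cmp_assoc zhat_eq. reflexivity.
Qed.

Lemma claim1' b : fmap NA (tau X b)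
  = zbar (RB (NA (RA (NB b)))) ⊚ (fmap NB (fmap D (zhat b) ⊚ cDelta (cmd X) b) ⊚ zinv b).
Proof.
  transitivity (fmap NA (tau X b) ⊚ (zbar b ⊚ zinv b)).
  - by rewrite zr cmp_id_r.
  - rewrite [LHS]cmp_assoc. nrw (claim1 b). by rewrite -cmp_assoc.
Qed.

Lemma ctau b : counit aA _ ⊚ fmap NA (tau X b) = gg b.
Proof. by rewrite tau_eq transL. Qed.

Lemma ax_d b : fmap RA (fmap NB (fmap RB (fmap NA (tau X b)))) ⊚ tau X b
  = tau X (RB (NA (RA (NB b)))) ⊚ tau X b.
Proof.
  apply: (transR_inj aA). cbn.
  rewrite (fmap_cmp NA) [LHS]cmp_assoc -co_nat -cmp_assoc. nrw (ctau b).
  rewrite (fmap_cmp NA) [RHS]cmp_assoc. nrw (ctau (RB (NA (RA (NB b))))).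
  rewrite !gg_def. have H := claim1' b. cbn in H. rewrite [in RHS]H.
  rewrite (cancel_mid _ _ _ _ (zl _)).
  rewrite !(fctx NB). nrw (claim2 b). reflexivity.
Qed.

End P1.

Section P2.
Context {B A T T' : Category} {NB : Functor B T} {RB : Functor T B}
  {NA : Functor A T} {RA : Functor T A} {NB' : Functor B T'} {NA' : Functor A T'}
  (F : Functor T' T) (X : RArrObj NB RB NA RA) (Y : RArrObj NB' (RB ○ F) NA' (RA ○ F))
  (t : Trans (cD (cmd X)) (cD (cmd Y))) (Hm : IsRArrMorphism F X Y t).
Local Notation D := (cD (cmd X)).
Local Notation D' := (cD (cmd Y)).
Local Notation aB := (adjB X).
Local Notation aA := (adjA X).
Local Notation aB' := (adjB Y).
Local Notation aA' := (adjA Y).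

Definition aa (y : A) : Hom (NA y) (F (NA' y)) := counit aA (F (NA' y)) ⊚ fmap NA (unit aA' y).
Definition bb (y : B) : Hom (NB y) (F (NB' y)) := counit aB (F (NB' y)) ⊚ fmap NB (unit aB' y).

Lemma K1 y : fmap RB (bb y) ⊚ unit aB y = unit aB' y.
Proof. rewrite /bb. exact: (transR aB _ _ (unit aB' y)). Qed.

Lemma tn : forall x y (f : Hom x y), fmap D' f ⊚ t x = t y ⊚ fmap D f.
Proof. case: Hm => [[Ht _] _]. exact Ht. Qed.

Lemma mc (x : T') : fmap RB (aa (RA (F x))) ⊚ zeta X (F x) = zeta Y x ⊚ t (RB (F x)).
Proof. case: Hm => [_ H]. exact (H x). Qed.

Definition cc (x : B) : Hom (NA (RA (NB x))) (F (NA' (RA (F (NB' x))))) :=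
  aa (RA (F (NB' x))) ⊚ fmap NA (fmap RA (bb x)).

Lemma K2 x : fmap RB (cc x) ⊚ zhat X x = zhat Y x ⊚ t x.
Proof.
  rewrite /cc zhat_def zhat_def (fmap_cmp RB) -!cmp_assoc.
  rewrite (ctx (zn X _ _ (bb x))) -!cmp_assoc. nrw (ctx (mc (NB' x))).
  rewrite -!cmp_assoc -(fmap_cmp D) K1. nrw (tn _ _ (unit aB' x)). reflexivity.
Qed.


Lemma K3 x : cc x ⊚ zetabar aB (zeta X) x
  = fmap F (zetabar aB' (zeta Y) x) ⊚ (bb (D' x) ⊚ fmap NB (t x)).
Proof.
  apply: (transL_inj aB).
  rewrite (fmap_cmp RB) -cmp_assoc. nrw (zhat_eq X x). nrw (K2 x).
  rewrite -> !(fmap_cmp RB). ras. rewrite un_nat. nrw (ctx (K1 (D' x))).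
  nrw (ctx (zhat_eq Y x)). reflexivity.
Qed.

Lemma K4 y1 y2 (f : Hom y1 y2) : fmap F (fmap NB' f) ⊚ bb y1 = bb y2 ⊚ fmap NB f.
Proof.
  rewrite /bb cmp_assoc co_nat -cmp_assoc -(fmap_cmp NB).
  have E := un_nat aB' _ _ f. cbn in E. rewrite E.
  by rewrite fmap_cmp cmp_assoc.
Qed.


Lemma cc_eq x : cc x = fmap F (zetabar aB' (zeta Y) x)
   ⊚ (bb (D' x) ⊚ (fmap NB (t x) ⊚ zetainv X x)).
Proof.
  transitivity (cc x ⊚ (zetabar aB (zeta X) x ⊚ zetainv X x)).
  - have E := zr X x. cbn in E. cbn. rewrite -> E. by rewrite cmp_id_r.
  - rewrite -> cmp_assoc. nrw (K3 x). by ras.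
Qed.

Lemma L5 (w : T') (v : A) (h : Hom (NA' v) w) :
  counit aA (F w) ⊚ fmap NA (fmap RA (fmap F h) ⊚ unit aA' v) = fmap F h ⊚ aa v.
Proof.
  rewrite -> fmap_cmp, cmp_assoc. rewrite -co_nat. rewrite /aa. by ras.
Qed.

Lemma FZ x : fmap F (zetainv Y x) ⊚ fmap F (zetabar aB' (zeta Y) x) = idm _.
Proof. rewrite <- fmap_cmp. have E := zl Y x. cbn in E. cbn. rewrite -> E. apply: fmap_id. Qed.

Lemma part2c x : fmap RA (bb (RB (F (NA' (RA (F (NB' x)))))) ⊚ fmap NB (fmap RB (cc x)))
   ⊚ tau X x = tau Y x ⊚ fmap RA (bb x).
Proof.
  apply: (transR_inj aA).
  rewrite -> (fmap_cmp NA), cmp_assoc. rewrite -co_nat. ras. nrw (ctau X x).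
  rewrite -> (fmap_cmp NA), cmp_assoc. nrw (tau_eq Y x).
  nrw (ctx (L5 _ _ (gg Y x))). ras.
  change (aa (RA (F (NB' x))) ⊚ fmap NA (fmap RA (bb x))) with (cc x).
  rewrite [in RHS](cc_eq x) !gg_def.
  rewrite -> (fmap_cmp F). cbn. rewrite (cancel_mid _ _ _ _ (FZ x)).
  nrw (ctx (K4 _ _ (zhat Y x))). ras. rewrite !(fctx NB). nrw (K2 x). reflexivity.
Qed.

End P2.

Theorem mainTheorem8 :
  (* (1) every object of RArr-bar(B, A) yields a pre-torsor *)
  (forall (B A T : Category) (NB : Functor B T) (RB : Functor T B)
          (NA : Functor A T) (RA : Functor T A) (X : RArrObj NB RB NA RA),
      IsPreTorsor (adjA X) (adjB X) (tau X)) /\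
  (* (2) morphisms of RArr-bar(B, A) yield morphisms of pre-torsors *)
  (forall (B A T T' : Category) (NB : Functor B T) (RB : Functor T B)
          (NA : Functor A T) (RA : Functor T A)
          (NB' : Functor B T') (NA' : Functor A T') (F : Functor T' T)
          (X : RArrObj NB RB NA RA) (Y : RArrObj NB' (RB ○ F) NA' (RA ○ F))
          (t : Trans (cD (cmd X)) (cD (cmd Y))),
      IsRArrMorphism F X Y t ->
      IsPreTorsorMorphism F (adjA X) (adjB X) (tau X) (adjA Y) (adjB Y) (tau Y)).
Proof.
  split.
  - move=> B A T NB RB NA RA X. split; [|split; [|split]].
    + exact: tau_nat.
    + move=> x. exact: (ax_b X x).
    + move=> x. exact: (ax_c X x).
    + move=> x. exact: (ax_d X x).
  - move=> B A T T' NB RB NA RA NB' NA' F X Y t Hm. rewrite /IsPreTorsorMorphism. move=> x.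
    exact (part2c F X Y t Hm x).
Qed.
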